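(* For every $N_0\in\mathbb{N}$ there exists an instance of the binary voting game (as described in the context) with $N>N_0$ agents in which no strong Bayes Nash Equilibrium exists, i.e. no strategy profile is a $0$-strong Bayes Nash Equilibrium.
   Context: Binary voting game. $N$ agents each vote for one of two alternatives $\mathbf{A}$ or $\mathbf{R}$. There is an unobserved world state $W\in\{L,H\}$ with common prior $P_L=\Pr[W=L]>0$, $P_H=\Pr[W=H]>0$. Conditional on $W$, each agent $n$ independently receives a private signal $S_n\in\{l,h\}$ with $P_{sw}=\Pr[S_n=s\mid W=w]$ (identical across agents), where $P_{hH}>P_{hL}$ and $P_{lH}<P_{lL}$. For a threshold $\mu\in(0,1)$, $\mathbf{A}$ wins iff at least $\mu N$ agents vote for $\mathbf{A}$; otherwise $\mathbf{R}$ wins. Each agent $n$ has a utility $v_n:\{L,H\}\times\{\mathbf{A},\mathbf{R}\}\to\{0,1,\dots,B\}$ ($B$ a positive integer) with $v_n(H,\mathbf{A})>v_n(L,\mathbf{A})$ and $v_n(H,\mathbf{R})<v_n(L,\mathbf{R})$. A (mixed) strategy of an agent is a map from her signal to a distribution over $\{\mathbf{A},\mathbf{R}\}$, written $\sigma=(\beta_l,\beta_h)$ where $\beta_s$ is the probability of voting $\mathbf{A}$ on signal $s$; a strategy profile is $\Sigma=(\sigma_1,\dots,\sigma_N)$. Let $\lambda^{\mathbf{A}}_w(\Sigma)$, $\lambda^{\mathbf{R}}_w(\Sigma)$ be the (ex-ante) probabilities that $\mathbf{A}$, resp. $\mathbf{R}$, wins when the state is $w$. The ex-ante expected utility of agent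 $n$ is $u_n(\Sigma)=\sum_{w\in\{L,H\}}P_w\big(\lambda^{\mathbf{A}}_w(\Sigma)v_n(w,\mathbf{A})+\lambda^{\mathbf{R}}_w(\Sigma)v_n(w,\mathbf{R})\big)$. A profile $\Sigma$ is an $\varepsilon$-strong Bayes Nash Equilibrium if there is no set $D$ of agents and profile $\Sigma'$ such that $\sigma'_n=\sigma_n$ for all $n\notin D$, $u_n(\Sigma')\ge u_n(\Sigma)$ for all $n\in D$, and $u_n(\Sigma')>u_n(\Sigma)+\varepsilon$ for some $n\in D$. A strong Bayes Nash Equilibrium is a $0$-strong Bayes Nash Equilibrium. *)

(* Defs.v *)
From HB Require Import structures.
From mathcomp Require Import all_boot all_order all_algebra.
From mathcomp Require Import reals.
Set Implicit Arguments. Unset Strict Implicit. Unset Printing Implicit Defensive.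
Import Order.TTheory GRing.Theory Num.Theory.
Local Open Scope ring_scope.

Inductive world := L | H.
Inductive signal := sl | sh.
Inductive alt := AltA | AltR.

Record game (R : realType) := Game {
  N : nat;
  PL : R;  PH : R;
  Psig : signal -> world -> R;          (* Psig s w = Pr[S_n = s | W = w] *)
  mu : R;
  B : nat;
  v : 'I_N -> world -> alt -> nat;
  PL_pos : 0 < PL;
  PH_pos : 0 < PH;
  prior_sum : PL + PH = 1;
  Psig_ge0 : forall s w, 0 <= Psig s w;
  Psig_sum : forall w, Psig sl w + Psig sh w = 1;
  Psig_h : Psig sh L < Psig sh H;
  Psig_l : Psig sl H < Psig sl L;
  mu_pos : 0 < mu;
  mu_lt1 : mu < 1;
  B_pos : (0 < B)%N;
  v_le_B : forall n w a, (v n w a <= B)%N;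
  v_A : forall n, (v n L AltA < v n H AltA)%N;
  v_R : forall n, (v n H AltR < v n L AltR)%N
}.

Definition prior (R : realType) (G : game R) (w : world) : R :=
  match w with L => PL G | H => PH G end.

(* A mixed strategy (beta_l, beta_h): probabilities of voting A on signal l, h. *)
Definition strategy (R : realType) := (R * R)%type.
Definition valid_strategy (R : realType) (s : strategy R) : Prop :=
  0 <= s.1 <= 1 /\ 0 <= s.2 <= 1.

Definition profile (R : realType) (G : game R) := 'I_(N G) -> strategy R.
Definition valid_profile (R : realType) (G : game R) (S : profile G) : Prop :=
  forall n, valid_strategy (S n).

Definition voteA (R : realType) (G : game R) (S : profile G) (n : 'I_(N G))
  (w : world) : R :=
  Psig G sl w * (S n).1 + Psig G sh w * (S n).2.

Definition prob_set (R : realType) (G : game R) (S : profile G)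
  (T : {set 'I_(N G)}) (w : world) : R :=
  (\prod_(n in T) voteA S n w) * (\prod_(n in ~: T) (1 - voteA S n w)).

Definition lambdaA (R : realType) (G : game R) (S : profile G) (w : world) : R :=
  \sum_(T : {set 'I_(N G)} | mu G * (N G)%:R <= #|T|%:R) prob_set S T w.
Definition lambdaR (R : realType) (G : game R) (S : profile G) (w : world) : R :=
  \sum_(T : {set 'I_(N G)} | ~~ (mu G * (N G)%:R <= #|T|%:R)) prob_set S T w.

Definition utility (R : realType) (G : game R) (S : profile G) (n : 'I_(N G)) : R :=
  let term w := prior G w * (lambdaA S w * (v n w AltA)%:R
                             + lambdaR S w * (v n w AltR)%:R) in
  term L + term H.

Definition eps_strong_BNE (R : realType) (G : game R) (eps : R) (S : profile G)
  : Prop :=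
  ~ exists (D : {set 'I_(N G)}) (S' : profile G),
      [/\ valid_profile S',
          (forall n, n \notin D -> S' n = S n),
          (forall n, n \in D -> utility S n <= utility S' n) &
          (exists2 n, n \in D & utility S n + eps < utility S' n)].

Definition strong_BNE (R : realType) (G : game R) (S : profile G) : Prop :=
  eps_strong_BNE 0 S.

(* Main.v *)
Require Import Defs.
From HB Require Import structures.
From mathcomp Require Import all_boot all_order all_algebra.
From mathcomp Require Import reals.
From mathcomp Require Import lra.
Import Order.TTheory GRing.Theory Num.Theory.
Local Open Scope ring_scope.

Lemma sum_prob_set (R : realType) (G : game R) (S : profile G) w :
  \sum_(T : {set 'I_(N G)}) prob_set S T w = 1.
Proof.
have E : \prod_i (voteA S i w + (1 - voteA S i w)) =
   \sum_(J in {set 'I_(N G)}) \prod_i (if i \in J then voteA S i w else 1 - voteA S i w).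
  exact: (@bigA_distr R 0 1 *%R +%R _ (fun n => voteA S n w) (fun n => 1 - voteA S n w)).
move: E; rewrite (eq_bigr (fun=> 1)); last by move=> i _; rewrite addrCA subrr addr0.
rewrite big1_eq => ->; apply: eq_bigr => T _.
rewrite /prob_set [RHS](bigID (fun i => i \in T)) /=; congr (_ * _).
  by apply: eq_bigr => i ->.
by apply: eq_big => [i|i]; rewrite ?inE // => /negbTE ->.
Qed.

Lemma lamAR (R : realType) (G : game R) (S : profile G) w :
  lambdaA S w + lambdaR S w = 1.
Proof. by rewrite -(@sum_prob_set _ _ S w) (bigID (fun T : {set _} => mu G * (N G)%:R <= #|T|%:R)). Qed.

Lemma prob_set_ext (R : realType) (G : game R) (S S' : profile G) w :
  (forall n, voteA S' n w = voteA S n w) ->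
  (forall T, prob_set S' T w = prob_set S T w).
Proof.
move=> Hv T; rewrite /prob_set; congr (_ * _); apply: eq_bigr => i _; by rewrite Hv.
Qed.

Lemma lam_ext (R : realType) (G : game R) (S S' : profile G) w :
  (forall n, voteA S' n w = voteA S n w) ->
  lambdaA S' w = lambdaA S w /\ lambdaR S' w = lambdaR S w.
Proof.
move=> Hv; split; apply: eq_bigr => T _; exact: prob_set_ext.
Qed.

Definition psig (R : realType) (s : signal) (w : world) : R :=
  match s, w with sl, L => 1 | sh, H => 1 | _, _ => 0 end.
Arguments psig {R}.

Definition vtab (t : nat) (w : world) (a : alt) : nat :=
  match t, w, a with
  | 0, L, AltA => 2 | 0, H, AltA => 3 | 0, L, AltR => 1 | 0, H, AltR => 0
  | 1, L, AltA => 0 | 1, H, AltA => 1 | 1, L, AltR => 1 | 1, H, AltR => 0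
  | _, L, AltA => 1 | _, H, AltA => 2 | _, L, AltR => 1 | _, H, AltR => 0
  end.

Definition vf (n0 : nat) (n : 'I_n0) (w : world) (a : alt) : nat := vtab (val n) w a.
Arguments vf {n0}.

Lemma half_pos (R : realType) : 0 < (1 / 2 : R). Proof. lra. Qed.
Lemma half_sum (R : realType) : (1 / 2 + 1 / 2 : R) = 1. Proof. lra. Qed.
Lemma psig_ge0 (R : realType) s w : 0 <= @psig R s w. Proof. by case: s; case: w => /=; lra. Qed.
Lemma psig_sum (R : realType) w : @psig R sl w + psig sh w = 1. Proof. by case: w => /=; lra. Qed.
Lemma psig_h (R : realType) : @psig R sh L < psig sh H. Proof. rewrite /=; lra. Qed.
Lemma psig_l (R : realType) : @psig R sl H < psig sl L. Proof. rewrite /=; lra. Qed.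
Lemma mu_pos' (R : realType) N0 : (0 : R) < 2 / (N0.+3)%:R.
Proof. by rewrite divr_gt0 // ltr0n. Qed.
Lemma mu_lt1' (R : realType) N0 : (2 : R) / (N0.+3)%:R < 1.
Proof. by rewrite ltr_pdivrMr ?ltr0n // mul1r ltr_nat. Qed.
Lemma vf_le n0 (n : 'I_n0) w a : (vf n w a <= 3)%N.
Proof. by rewrite /vf; case: (val n) => [|[|m]]; case: w; case: a. Qed.
Lemma vf_A n0 (n : 'I_n0) : (vf n L AltA < vf n H AltA)%N.
Proof. by rewrite /vf; case: (val n) => [|[|m]]. Qed.
Lemma vf_R n0 (n : 'I_n0) : (vf n H AltR < vf n L AltR)%N.
Proof. by rewrite /vf; case: (val n) => [|[|m]]. Qed.

Definition mygame (R : realType) (N0 : nat) : game R :=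
  @Game R N0.+3 (1/2) (1/2) (@psig R) (2 / (N0.+3)%:R) 3 (@vf N0.+3)
    (half_pos R) (half_pos R) (half_sum R) (@psig_ge0 R) (@psig_sum R)
    (psig_h R) (psig_l R) (mu_pos' R N0) (mu_lt1' R N0) isT (@vf_le _) (@vf_A _) (@vf_R _).

Section Main.
Variables (R : realType) (N0 : nat).
Local Notation G := (mygame R N0).

Lemma thr (T : {set 'I_(N G)}) : (mu G * (N G)%:R <= #|T|%:R) = (2 <= #|T|)%N.
Proof. by rewrite /= divfK ?pnatr_eq0 // ler_nat. Qed.

Lemma voteA_L (S : profile G) n : voteA S n L = (S n).1.
Proof. by rewrite /voteA /= mul1r mul0r addr0. Qed.
Lemma voteA_H (S : profile G) n : voteA S n H = (S n).2.
Proof. by rewrite /voteA /= mul1r mul0r add0r. Qed.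

Definition a0 : 'I_(N0.+3) := ord0.
Definition a1 : 'I_(N0.+3) := @Ordinal (N0.+3) 1 isT.
Definition a2 : 'I_(N0.+3) := @Ordinal (N0.+3) 2 isT.

Lemma lamR_a (S : profile G) : (forall n, n != a1 -> (S n).1 = 1) -> lambdaR S L = 0.
Proof.
move=> HS; apply: big1 => T; rewrite thr -ltnNge => hT.
have [n nT nn1] : exists2 n, n \notin T & n != a1.
  case: (boolP (a0 \in T)) => h0; last by exists a0.
  case: (boolP (a2 \in T)) => h2; last by exists a2.
  have : (#|[set a0; a2]| <= #|T|)%N.
    by apply: subset_leq_card; apply/subsetP => x; rewrite !inE => /orP[]/eqP->.
  by rewrite cards2 /= leqNgt (leq_trans hT).
rewrite /prob_set [X in _ * X](bigD1 n) /=; last by rewrite inE.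
by rewrite voteA_L HS // subrr mul0r mulr0.
Qed.

Lemma lamA_b (S : profile G) : (forall n, n != a0 -> (S n).1 = 0) -> lambdaA S L = 0.
Proof.
move=> HS; apply: big1 => T; rewrite thr => hT.
have [n nT nn0] : exists2 n, n \in T & n \notin [set a0].
  apply/subsetPn; apply: contraTN hT => /subset_leq_card.
  by rewrite cards1 -ltnNge ltnS.
rewrite /prob_set (bigD1 n) //=.
by rewrite voteA_L HS ?mul0r //; move: nn0; rewrite inE.
Qed.
End Main.
Arguments a0 {N0}. Arguments a1 {N0}. Arguments a2 {N0}.

Theorem theorem1 (R : realType) (N0 : nat) :
  exists G : game R, (N0 < N G)%N /\
    forall S : profile G, valid_profile S -> ~ strong_BNE S.
Proof.
exists (mygame R N0); split; first exact: (ltn_trans (ltnSn N0) (ltn_trans (ltnSn _) (ltnSn _))).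
move=> S vS HS; apply: HS.
have SL := @lamAR _ _ S L.
case: (ltrP (lambdaA S L) 1) => hlt.
- pose S' : profile (mygame R N0) := fun n => if n == a1 then S n else (1, (S n).2).
  have [HA HR] : lambdaA S' H = lambdaA S H /\ lambdaR S' H = lambdaR S H.
    by apply: lam_ext => n; rewrite !voteA_H /S'; case: ifP.
  have RL : lambdaR S' L = 0 by apply: lamR_a => n /negbTE; rewrite /S' => ->.
  have AL : lambdaA S' L = 1 by have := @lamAR _ _ S' L; rewrite RL addr0.
  exists (~: [set a1]), S'; split.
  + move=> n; rewrite /S'; case: ifP => _; first exact: vS.
    have [_ h2] := vS n; rewrite /valid_strategy /=; split => //; by rewrite ?ler01 ?lexx.
  + by move=> n; rewrite !inE negbK /S' => ->.
  + move=> n; rewrite !inE => hn.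
    rewrite /utility HA HR AL RL /= /vf; case: n hn => [[|[|m]] Hm] //= _; lra.
  + exists a0; first by rewrite !inE.
    rewrite /utility HA HR AL RL /= /vf /=; lra.
- pose S' : profile (mygame R N0) := fun n => if n == a0 then S n else (0, (S n).2).
  have [HA HR] : lambdaA S' H = lambdaA S H /\ lambdaR S' H = lambdaR S H.
    by apply: lam_ext => n; rewrite !voteA_H /S'; case: ifP.
  have AL : lambdaA S' L = 0 by apply: lamA_b => n /negbTE; rewrite /S' => ->.
  have RL : lambdaR S' L = 1 by have := @lamAR _ _ S' L; rewrite AL add0r.
  exists (~: [set a0]), S'; split.
  + move=> n; rewrite /S'; case: ifP => _; first exact: vS.
    have [_ h2] := vS n; rewrite /valid_strategy /=; split => //; by rewrite ?ler01 ?lexx.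
  + by move=> n; rewrite !inE negbK /S' => ->.
  + move=> n; rewrite !inE => hn.
    rewrite /utility HA HR AL RL /= /vf; case: n hn => [[|[|m]] Hm] //= _; lra.
  + exists a1; first by rewrite !inE.
    rewrite /utility HA HR AL RL /= /vf /=; lra.
Qed.
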